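(* For every $c_s>0$, there exists $\epsilon_0>0$ such that whenever $\epsilon\in(0,\epsilon_0]$, there is a constant $\delta>0$ (depending on $c_s$ and $\epsilon$) such that $$\inf_{K\in[c_s,c_s^{-1}]}|c'(K)|\geq\delta,$$ where $c$ is the function associated with the potential $\Phi(x)=\frac{x^2}{2}+\frac{\epsilon x^4}{2}$ as described in the context.
   Context: Let $\epsilon>0$, $\Phi(x)=\frac{x^2}{2}+\frac{\epsilon x^4}{2}$ and $H(x,v)=\frac{v^2}{2}+\Phi(x)$. For $(x,v)\neq(0,0)$ define the angle $\chi\in\mathbb{R}/2\pi\mathbb{Z}$ by $\chi=\arcsin\big(v/\sqrt{2H}\big)$ if $x>0$ and $\chi=\pi-\arcsin\big(v/\sqrt{2H}\big)$ if $x\leq 0$; then $(x,v)\mapsto(\chi,H)$ is a bijection onto $(\mathbb{R}/2\pi\mathbb{Z})\times(0,\infty)$, and we write $x=x(\chi,H)$. Set $a(\chi,H)=\sqrt{2}\,\frac{1+2\epsilon x^2}{\sqrt{1+\epsilon x^2}}$ with $x=x(\chi,H)$. Define $c(H)>0$ for $H>0$ by $c(H)\int_0^{2\pi}\frac{\mathrm{d}\chi}{a(\chi,H)}=2\pi$; we also write $c(K)$ with $K=H$. *)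

(* Defs.v *)
From Stdlib Require Import Reals ZArith ClassicalEpsilon.
From Coquelicot Require Import Coquelicot.
Open Scope R_scope.

Definition Phi (eps x : R) : R := x ^ 2 / 2 + eps * x ^ 4 / 2.
Definition Ham (eps x v : R) : R := v ^ 2 / 2 + Phi eps x.

(* The angle chi(x,v), as a real representative of its class in R/2piZ. *)
Definition chi_of (eps x v : R) : R :=
  if Rlt_dec 0 x then asin (v / sqrt (2 * Ham eps x v))
  else PI - asin (v / sqrt (2 * Ham eps x v)).

(* x(chi,H): the x-coordinate of the (unique, for H > 0) point (x,v) <> (0,0)
   with Ham(x,v) = H and chi(x,v) = chi mod 2pi.  Chosen by Hilbert epsilon. *)
Definition xcoord (eps chi H : R) : R :=
  epsilon (inhabits 0) (fun x => exists v : R, exists k : Z,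
     (x, v) <> (0, 0) /\ Ham eps x v = H /\ chi_of eps x v = chi + 2 * IZR k * PI).

Definition afun (eps chi H : R) : R :=
  let x := xcoord eps chi H in
  sqrt 2 * (1 + 2 * eps * x ^ 2) / sqrt (1 + eps * x ^ 2).

Definition cfun (eps H : R) : R :=
  2 * PI / RInt (fun chi => / afun eps chi H) 0 (2 * PI).

(* Main.v *)
Require Import Defs.
From Stdlib Require Import Reals Lra Psatz ZArith ClassicalEpsilon.
From Coquelicot Require Import Coquelicot.
Open Scope R_scope.

Definition Wf eps s := sqrt (1 + 8*eps*s).

Lemma Wf_sq eps s : 0 <= 1 + 8*eps*s -> Wf eps s ^ 2 = 1 + 8*eps*s.
Proof. intros. unfold Wf. rewrite <- Rsqr_pow2. now apply Rsqr_sqrt. Qed.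

Lemma Wf_ge1 eps s : 0 <= eps -> 0 <= s -> 1 <= Wf eps s.
Proof. intros. unfold Wf. apply Rle_trans with (sqrt 1); [rewrite sqrt_1; lra | apply sqrt_le_1_alt; nra]. Qed.

Lemma Wf_gt1 eps s : 0 < eps -> 0 < s -> 1 < Wf eps s.
Proof. intros. unfold Wf. apply Rle_lt_trans with (sqrt 1); [rewrite sqrt_1; lra | apply sqrt_lt_1_alt; nra]. Qed.

Lemma Phi_ge0 eps x : 0 < eps -> 0 <= Phi eps x.
Proof. intros. unfold Phi. assert (0 <= x^2) by nra. assert (0 <= x^4) by (replace (x^4) with ((x^2)^2) by ring; nra). nra. Qed.

Lemma xsq_unique eps H chi x v k : 0 < eps -> 0 < H ->
  Ham eps x v = H -> chi_of eps x v = chi + 2 * IZR k * PI ->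
  x ^ 2 = (Wf eps (H * cos chi ^ 2) - 1) / (2 * eps).
Proof.
  intros He HH Hh Hc.
  assert (Hp := Phi_ge0 eps x He).
  assert (Hv : v ^ 2 <= 2 * H) by (unfold Ham in Hh; lra).
  set (y := v / sqrt (2 * H)).
  assert (Hs2 : 0 < sqrt (2 * H)) by (apply sqrt_lt_R0; lra).
  assert (Hsq : sqrt (2 * H) ^ 2 = 2 * H) by (rewrite <- Rsqr_pow2; apply Rsqr_sqrt; lra).
  assert (Hy2 : y ^ 2 = v ^ 2 / (2 * H)).
  { unfold y, Rdiv. rewrite Rpow_mult_distr, pow_inv, Hsq. reflexivity. }
  assert (Hy : -1 <= y <= 1).
  { assert (y^2 <= 1). { rewrite Hy2. apply Rmult_le_reg_r with (2*H). lra.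
      unfold Rdiv. rewrite Rmult_assoc, Rinv_l by lra. lra. }
    split; nra. }
  assert (Hsin : sin (chi_of eps x v) = y).
  { unfold chi_of. rewrite Hh. fold y. destruct (Rlt_dec 0 x).
    - now apply sin_asin.
    - rewrite sin_PI_x. now apply sin_asin. }
  assert (Hsc : sin chi = y).
  { rewrite <- Hsin, Hc.
    replace (chi + 2 * IZR k * PI) with (chi + IZR k * (2 * PI)) by ring.
    destruct (Z_le_gt_dec 0 k).
    - rewrite <- (Z2Nat.id k) by lia. rewrite <- INR_IZR_INZ.
      replace (chi + INR (Z.to_nat k) * (2*PI)) with (chi + 2 * INR (Z.to_nat k) * PI) by ring.
      now rewrite sin_period.
    - assert (k = - Z.of_nat (Z.to_nat (-k)))%Z by lia. rewrite H0, opp_IZR, <- INR_IZR_INZ.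
      rewrite <- (sin_period (chi + - INR (Z.to_nat (- k)) * (2 * PI)) (Z.to_nat (-k))).
      f_equal. ring. }
  assert (HPhi : Phi eps x = H * cos chi ^ 2).
  { assert (Hsc2 := sin2_cos2 chi). unfold Rsqr in Hsc2.
    unfold Ham in Hh. assert (v ^ 2 = 2 * H * sin chi ^ 2).
    { rewrite Hsc, Hy2. field. lra. }
    nra. }
  unfold Phi in HPhi.
  set (u := x ^ 2) in *.
  assert (Hu : 0 <= u) by (unfold u; nra).
  replace (x ^ 4) with (u ^ 2) in HPhi by (unfold u; ring).
  assert (Hcos : 0 <= cos chi ^ 2) by nra.
  assert (Wf eps (H * cos chi ^ 2) = 2 * eps * u + 1).
  { unfold Wf. replace (1 + 8 * eps * (H * cos chi ^ 2)) with ((2*eps*u+1)^2) by nra.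
    rewrite <- Rsqr_pow2. apply sqrt_Rsqr. nra. }
  rewrite H0. field. lra.
Qed.


Lemma xexists eps chi H : 0 < eps -> 0 < H -> 0 <= chi <= 2 * PI ->
  exists x v : R, exists k : Z,
     (x, v) <> (0, 0) /\ Ham eps x v = H /\ chi_of eps x v = chi + 2 * IZR k * PI.
Proof.
  intros He HH Hchi.
  set (s := H * cos chi ^ 2).
  assert (Hs : 0 <= s) by (unfold s; nra).
  set (U := (Wf eps s - 1) / (2 * eps)).
  assert (HW := Wf_ge1 eps s ltac:(lra) Hs).
  assert (HW2 := Wf_sq eps s ltac:(nra)).
  assert (HU : 0 <= U) by (unfold U; apply Rmult_le_pos; [lra | apply Rlt_le, Rinv_0_lt_compat; lra]).
  set (x := if Rlt_dec 0 (cos chi) then sqrt U else - sqrt U).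
  set (v := sqrt (2 * H) * sin chi).
  assert (Hx2 : x ^ 2 = U).
  { assert (Hq := sqrt_sqrt U HU). unfold x. destruct (Rlt_dec 0 (cos chi)); nra. }
  assert (Hs2 : 0 < sqrt (2 * H)) by (apply sqrt_lt_R0; lra).
  assert (Hsq : sqrt (2 * H) ^ 2 = 2 * H) by (rewrite <- Rsqr_pow2; apply Rsqr_sqrt; lra).
  assert (Hham : Ham eps x v = H).
  { unfold Ham, Phi. replace (x ^ 4) with ((x^2)^2) by ring. rewrite Hx2.
    unfold v. rewrite Rpow_mult_distr, Hsq.
    assert (HUe : eps * U ^ 2 + U = 2 * s).
    { unfold U. field_simplify; [| lra]. rewrite HW2. field. lra. }
    assert (Hsc2 := sin2_cos2 chi). unfold Rsqr in Hsc2. unfold s in HUe. nra. }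
  exists x, v.
  assert (Hpi := PI_RGT_0).
  assert (Hy : v / sqrt (2 * Ham eps x v) = sin chi).
  { rewrite Hham. unfold v. field. lra. }
  assert (Hne : (x, v) <> (0, 0)).
  { intro E. injection E as E1 E2. rewrite E1, E2 in Hham. unfold Ham, Phi in Hham. nra. }
  destruct (Rlt_dec 0 (cos chi)) as [Hc|Hc].
  - assert (Hxp : 0 < x).
    { unfold x. destruct (Rlt_dec 0 (cos chi)); [|contradiction].
      apply sqrt_lt_R0. unfold U. apply Rmult_lt_0_compat; [|apply Rinv_0_lt_compat; lra].
      assert (1 < Wf eps s) by (apply Wf_gt1; [lra| unfold s; apply Rmult_lt_0_compat; [lra| apply pow_lt; lra]]). lra. }
    unfold chi_of. destruct (Rlt_dec 0 x); [|lra]. rewrite Hy.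
    destruct (Rle_dec chi (PI/2)).
    + exists 0%Z. split; [auto|split; auto]. rewrite asin_sin by lra. simpl; ring.
    + destruct (Rle_dec chi (3 * (PI/2))).
      * assert (cos chi <= 0) by (apply cos_le_0; lra). lra.
      * exists (-1)%Z. split; [auto|split; auto].
        replace (sin chi) with (sin (chi - 2 * PI)).
        2:{ rewrite <- (sin_period (chi - 2 * PI) 1). simpl INR. f_equal. ring. }
        rewrite asin_sin by lra. simpl IZR. ring.
  - assert (Hxn : ~ 0 < x).
    { unfold x. destruct (Rlt_dec 0 (cos chi)); [contradiction|].
      assert (0 <= sqrt U) by apply sqrt_pos. lra. }
    unfold chi_of. destruct (Rlt_dec 0 x); [contradiction|]. rewrite Hy.
    exists 0%Z. split; [auto|split; auto].
    assert (PI/2 <= chi <= 3 * (PI/2)).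
    { split; apply Rnot_lt_le; intro; apply Hc.
      - apply cos_gt_0; lra.
      - replace (cos chi) with (cos (chi - 2 * PI)).
        2:{ rewrite <- (cos_period (chi - 2 * PI) 1). simpl INR. f_equal. ring. }
        apply cos_gt_0; lra. }
    rewrite <- sin_PI_x. rewrite asin_sin by lra. simpl IZR. ring.
Qed.

Lemma xcoord_sq eps chi H : 0 < eps -> 0 < H -> 0 <= chi <= 2 * PI ->
  xcoord eps chi H ^ 2 = (Wf eps (H * cos chi ^ 2) - 1) / (2 * eps).
Proof.
  intros He HH Hc. unfold xcoord.
  destruct (xexists eps chi H He HH Hc) as [x [v [k Hk]]].
  match goal with |- (epsilon ?i ?P) ^ 2 = _ =>
    assert (Hsp := epsilon_spec i P (ex_intro _ x (ex_intro _ v (ex_intro _ k Hk)))) end.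
  destruct Hsp as [v' [k' [_ [H1 H2]]]].
  eapply xsq_unique; eauto.
Qed.


Definition Gf eps s := sqrt (1 + Wf eps s) / (2 * Wf eps s).
Definition dGf eps s := - eps * (Wf eps s + 2) / (Wf eps s ^ 3 * sqrt (1 + Wf eps s)).

Lemma inv_afun eps chi H : 0 < eps -> 0 < H -> 0 <= chi <= 2 * PI ->
  / afun eps chi H = Gf eps (H * cos chi ^ 2).
Proof.
  intros He HH Hc. unfold afun. rewrite (xcoord_sq eps chi H He HH Hc).
  set (s := H * cos chi ^ 2).
  assert (Hs : 0 <= s) by (unfold s; nra).
  assert (HW := Wf_ge1 eps s ltac:(lra) Hs).
  unfold Gf. set (W := Wf eps s) in *.
  replace (1 + 2 * eps * ((W - 1) / (2 * eps))) with W by (field; lra).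
  replace (1 + eps * ((W - 1) / (2 * eps))) with ((1 + W) / 2) by (field; lra).
  rewrite sqrt_div by lra.
  assert (H2 : sqrt 2 * sqrt 2 = 2) by (apply sqrt_sqrt; lra).
  assert (0 < sqrt 2) by (apply sqrt_lt_R0; lra).
  assert (0 < sqrt (1 + W)) by (apply sqrt_lt_R0; lra).
  replace (2 * W) with (sqrt 2 * sqrt 2 * W) by (rewrite H2; ring). field. lra.
Qed.

Lemma Gf_derive eps s : 0 < eps -> 0 <= s -> is_derive (Gf eps) s (dGf eps s).
Proof.
  intros He Hs. unfold Gf, dGf, Wf.
  assert (HW := Wf_ge1 eps s ltac:(lra) Hs). unfold Wf in HW.
  auto_derive.
  - repeat split; try nra. 
  - set (w := sqrt (1 + 8 * eps * s)) in *.
    assert (Hq : 0 < sqrt (1 + w)) by (apply sqrt_lt_R0; lra).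
    assert (Hq2 : sqrt (1 + w) * sqrt (1 + w) = 1 + w) by (apply sqrt_sqrt; lra).
    set (q := sqrt (1 + w)) in *.
    replace (q * (- (2 * (8 * eps * 1 * / (2 * w))) * / (2 * w * (2 * w))))
      with ((q * q) * (- (2 * (8 * eps * 1 * / (2 * w))) * / (2 * w * (2 * w))) / q) by (field; lra).
    rewrite Hq2. field. lra.
Qed.



Lemma loc_pos K : 0 < K -> locally K (fun y : R => 0 < y).
Proof.
  intros HK. exists (mkposreal K HK). intros y Hy.
  apply Rabs_lt_between' in Hy. simpl in Hy. lra.
Qed.

Lemma Gf_cont eps s : 0 < eps -> 0 <= s -> continuous (Gf eps) s.
Proof. intros. apply (ex_derive_continuous (K:=R_AbsRing) (V:=R_NormedModule)). eexists. now apply Gf_derive. Qed.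

Lemma dGf_cont eps s : 0 < eps -> 0 <= s -> continuous (dGf eps) s.
Proof.
  intros He Hs. apply (ex_derive_continuous (K:=R_AbsRing) (V:=R_NormedModule)). unfold dGf, Wf.
  assert (HW := Wf_ge1 eps s ltac:(lra) Hs). unfold Wf in HW.
  auto_derive. repeat split; try nra.
  assert (0 < sqrt (1 + sqrt (1 + 8 * eps * s))) by (apply sqrt_lt_R0; lra).
  assert (0 < sqrt (1 + 8 * eps * s) ^ 3) by (apply pow_lt; lra).
  apply Rgt_not_eq. apply Rmult_lt_0_compat; lra.
Qed.

Lemma f_derive eps u t : 0 < eps -> 0 < u ->
  is_derive (fun z => Gf eps (z * cos t ^ 2)) u (cos t ^ 2 * dGf eps (u * cos t ^ 2)).
Proof.
  intros He Hu.
  apply (is_derive_comp (Gf eps) (fun z => z * cos t ^ 2)).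
  - apply Gf_derive; auto. apply Rmult_le_pos; [lra|]. apply pow2_ge_0.
  - auto_derive; [auto| ring].
Qed.


Lemma ex_RInt_f eps y : 0 < eps -> 0 < y ->
  ex_RInt (fun t => Gf eps (y * cos t ^ 2)) 0 (2 * PI).
Proof.
  intros He Hy. apply (ex_RInt_continuous (V:=R_CompleteNormedModule)). intros z _.
  apply (continuous_comp (fun t => y * cos t ^ 2) (Gf eps)).
  - apply (ex_derive_continuous (K:=R_AbsRing) (V:=R_NormedModule)). auto_derive. auto.
  - apply Gf_cont; auto. apply Rmult_le_pos; [lra|]. apply pow2_ge_0.
Qed.

Lemma ex_RInt_df eps y : 0 < eps -> 0 < y ->
  ex_RInt (fun t => cos t ^ 2 * dGf eps (y * cos t ^ 2)) 0 (2 * PI).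
Proof.
  intros He Hy. apply (ex_RInt_continuous (V:=R_CompleteNormedModule)). intros z _.
  apply (continuous_mult (fun t => cos t ^ 2)).
  - apply (ex_derive_continuous (K:=R_AbsRing) (V:=R_NormedModule)). auto_derive. auto.
  - apply (continuous_comp (fun t => y * cos t ^ 2) (dGf eps)).
    + apply (ex_derive_continuous (K:=R_AbsRing) (V:=R_NormedModule)). auto_derive. auto.
    + apply dGf_cont; auto. apply Rmult_le_pos; [lra|]. apply pow2_ge_0.
Qed.


Lemma cpt_of_cont (f : R -> R) x : continuous f x -> continuity_pt f x.
Proof. intros. now apply continuity_pt_filterlim. Qed.

Lemma cos2_cont v : continuity_pt (fun x => cos x ^ 2) v.
Proof. apply cpt_of_cont. apply (ex_derive_continuous (K:=R_AbsRing) (V:=R_NormedModule)). auto_derive. auto. Qed.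

Lemma cont2d eps K t : 0 < eps -> 0 < K ->
  continuity_2d_pt (fun u v => Derive (fun z => Gf eps (z * cos v ^ 2)) u) K t.
Proof.
  intros He HK.
  apply continuity_2d_pt_ext_loc with (f := fun u v => cos v ^ 2 * dGf eps (u * cos v ^ 2)).
  - exists (mkposreal K HK). intros u v Hu _. apply Rabs_lt_between' in Hu. simpl in Hu.
    symmetry. apply is_derive_unique, f_derive; lra.
  - apply continuity_2d_pt_mult.
    + apply (continuity_1d_2d_pt_comp (fun x => cos x ^ 2) (fun _ v => v)).
      * apply cos2_cont.
      * apply continuity_2d_pt_id2.
    + apply (continuity_1d_2d_pt_comp (dGf eps) (fun u v => u * cos v ^ 2)).
      * apply cpt_of_cont. apply dGf_cont; auto. apply Rmult_le_pos; [lra|]. apply pow2_ge_0.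
      * apply continuity_2d_pt_mult.
        -- apply continuity_2d_pt_id1.
        -- apply (continuity_1d_2d_pt_comp (fun x => cos x ^ 2) (fun _ v => v)).
           ++ apply cos2_cont.
           ++ apply continuity_2d_pt_id2.
Qed.

Definition Jf eps H := RInt (fun t => Gf eps (H * cos t ^ 2)) 0 (2 * PI).
Definition dJf eps H := RInt (fun t => cos t ^ 2 * dGf eps (H * cos t ^ 2)) 0 (2 * PI).

Lemma Jf_derive eps K : 0 < eps -> 0 < K -> is_derive (Jf eps) K (dJf eps K).
Proof.
  intros He HK.
  assert (Hd : dJf eps K = RInt (fun t => Derive (fun u => Gf eps (u * cos t ^ 2)) K) 0 (2 * PI)).
  { unfold dJf. apply RInt_ext. intros. symmetry. apply is_derive_unique, f_derive; auto. }
  rewrite Hd. unfold Jf.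
  apply (is_derive_RInt_param (fun u t => Gf eps (u * cos t ^ 2))).
  - apply (filter_imp (fun y : R => 0 < y)); [| now apply loc_pos].
    intros y Hy t _. eexists. apply f_derive; auto.
  - intros t _. apply cont2d; auto.
  - apply (filter_imp (fun y : R => 0 < y)); [| now apply loc_pos].
    intros y Hy. apply ex_RInt_f; auto.
Qed.


Lemma PI_pos' : 0 < PI. Proof. exact PI_RGT_0. Qed.

Lemma cfun_loc eps K : 0 < eps -> 0 < K ->
  locally K (fun H => 2 * PI / Jf eps H = cfun eps H).
Proof.
  intros He HK. apply (filter_imp (fun y : R => 0 < y)); [| now apply loc_pos].
  intros H HH. unfold cfun, Jf.
  replace (RInt (fun chi => / afun eps chi H) 0 (2*PI)) with (RInt (fun t => Gf eps (H * cos t ^ 2)) 0 (2*PI)); [reflexivity|].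
  apply RInt_ext.
  assert (Hp := PI_pos'). rewrite Rmin_left, Rmax_right by lra.
  intros x Hx. symmetry. apply inv_afun; auto. lra.
Qed.

Lemma cos2_int : is_RInt (fun t => cos t ^ 2) 0 (2 * PI) PI.
Proof.
  assert (H : is_RInt (fun t => cos t ^ 2) 0 (2 * PI)
     (minus ((fun t => (t + sin t * cos t) / 2) (2 * PI)) ((fun t => (t + sin t * cos t) / 2) 0))).
  { apply (is_RInt_derive (V:=R_CompleteNormedModule) (fun t => (t + sin t * cos t) / 2)).
    - intros x _. auto_derive; auto.
      assert (H := sin2_cos2 x). unfold Rsqr in H. nra.
    - intros x _. apply (ex_derive_continuous (K:=R_AbsRing) (V:=R_NormedModule)). auto_derive. auto. }
  revert H. cbv beta. unfold minus, plus, opp. simpl. rewrite sin_2PI, sin_0.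
  replace ((2 * PI + 0 * cos (2 * PI)) / 2 + - ((0 + 0 * cos 0) / 2)) with PI by field. auto.
Qed.

Lemma dGf_bound eps s S : 0 < eps -> 0 <= s <= S ->
  dGf eps s <= - (eps / (Wf eps S ^ 3 * (1 + Wf eps S))).
Proof.
  intros He Hs. unfold dGf.
  assert (Hw := Wf_ge1 eps s ltac:(lra) ltac:(lra)).
  assert (HwS : Wf eps s <= Wf eps S) by (unfold Wf; apply sqrt_le_1_alt; nra).
  set (w := Wf eps s) in *. set (W := Wf eps S) in *.
  assert (Hq : 0 < sqrt (1 + w)) by (apply sqrt_lt_R0; lra).
  assert (Hq2 : sqrt (1 + w) * sqrt (1 + w) = 1 + w) by (apply sqrt_sqrt; lra).
  set (q := sqrt (1 + w)) in *.
  assert (Hqle : q <= 1 + W) by nra.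
  assert (Hw3 : w ^ 3 <= W ^ 3) by (apply pow_incr; lra).
  assert (Hw3p : 1 <= w ^ 3) by (replace 1 with (1 ^ 3) by ring; apply pow_incr; lra).
  assert (Hden : 0 < w ^ 3 * q) by nra.
  assert (HD : w ^ 3 * q <= W ^ 3 * (1 + W)) by (apply Rmult_le_compat; lra).
  unfold Rdiv. rewrite <- Ropp_mult_distr_l, Ropp_mult_distr_l_reverse.
  apply Ropp_le_contravar.
  rewrite Rmult_assoc. apply Rmult_le_compat_l; [lra|].
  apply Rle_trans with (/ (w ^ 3 * q)).
  - apply Rinv_le_contravar; lra.
  - rewrite <- (Rmult_1_l (/ (w ^ 3 * q))) at 1. apply Rmult_le_compat_r.
    + apply Rlt_le, Rinv_0_lt_compat; lra.
    + lra.
Qed.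

Lemma Gf_upper eps s : 0 < eps -> 0 <= s -> Gf eps s <= 1.
Proof.
  intros He Hs. unfold Gf.
  assert (Hw := Wf_ge1 eps s ltac:(lra) ltac:(lra)).
  set (w := Wf eps s) in *.
  assert (Hq : 0 < sqrt (1 + w)) by (apply sqrt_lt_R0; lra).
  assert (Hq2 : sqrt (1 + w) * sqrt (1 + w) = 1 + w) by (apply sqrt_sqrt; lra).
  set (q := sqrt (1 + w)) in *.
  assert (q <= 2 * w) by nra.
  apply Rmult_le_reg_r with (2 * w); [lra|]. unfold Rdiv. rewrite Rmult_assoc, Rinv_l by lra. lra.
Qed.

Lemma Gf_lower eps s S : 0 < eps -> 0 <= s <= S -> / (2 * Wf eps S) <= Gf eps s.
Proof.
  intros He Hs. unfold Gf.
  assert (Hw := Wf_ge1 eps s ltac:(lra) ltac:(lra)).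
  assert (HwS : Wf eps s <= Wf eps S) by (unfold Wf; apply sqrt_le_1_alt; nra).
  set (w := Wf eps s) in *. set (W := Wf eps S) in *.
  assert (Hq : 1 <= sqrt (1 + w)).
  { apply Rle_trans with (sqrt 1); [rewrite sqrt_1; lra | apply sqrt_le_1_alt; lra]. }
  unfold Rdiv. apply Rle_trans with (/ (2 * w)).
  - apply Rinv_le_contravar; lra.
  - rewrite <- (Rmult_1_l (/ (2 * w))) at 1. apply Rmult_le_compat_r.
    + apply Rlt_le, Rinv_0_lt_compat; lra.
    + lra.
Qed.


Theorem lemma4p3 :
  forall cs : R, 0 < cs ->
  exists eps0 : R, 0 < eps0 /\
    forall eps : R, 0 < eps <= eps0 ->
    exists delta : R, 0 < delta /\
      forall K : R, cs <= K <= / cs ->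
        ex_derive (cfun eps) K /\ delta <= Rabs (Derive (cfun eps) K).
Proof.
  intros cs Hcs. exists 1. split; [lra|]. intros eps [He _].
  set (S := / cs).
  assert (HS : 0 < S) by (apply Rinv_0_lt_compat; lra).
  assert (HW := Wf_ge1 eps S ltac:(lra) ltac:(lra)).
  set (W := Wf eps S) in *.
  set (m := eps / (W ^ 3 * (1 + W))).
  assert (HW3 : 1 <= W ^ 3) by (replace 1 with (1 ^ 3) by ring; apply pow_incr; lra).
  assert (Hm : 0 < m) by (unfold m; apply Rdiv_lt_0_compat; nra).
  exists (m / 2). split; [lra|].
  intros K HK.
  assert (HK0 : 0 < K) by lra.
  assert (Hpi := PI_RGT_0).
  assert (Hs : forall t, 0 <= K * cos t ^ 2 <= S).
  { intros t. assert (H1 := COS_bound t). split.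
    - apply Rmult_le_pos; [lra | apply pow2_ge_0].
    - assert (cos t ^ 2 <= 1) by nra. nra. }
  assert (HJup : Jf eps K <= 2 * PI).
  { unfold Jf. apply Rle_trans with (RInt (fun _ => 1) 0 (2 * PI)).
    - apply RInt_le; [lra | apply ex_RInt_f; auto | apply ex_RInt_const |].
      intros t _. apply Gf_upper; auto. apply Hs.
    - rewrite RInt_const. unfold scal; simpl. unfold mult; simpl. lra. }
  assert (HJlo : 2 * PI * / (2 * W) <= Jf eps K).
  { unfold Jf. apply Rle_trans with (RInt (fun _ => / (2 * W)) 0 (2 * PI)).
    - rewrite RInt_const. unfold scal; simpl. unfold mult; simpl. lra.
    - apply RInt_le; [lra | apply ex_RInt_const | apply ex_RInt_f; auto |].
      intros t _. apply Gf_lower; auto. }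
  assert (HJpos : 0 < Jf eps K).
  { assert (0 < 2 * PI * / (2 * W)) by (apply Rmult_lt_0_compat; [lra | apply Rinv_0_lt_compat; lra]). lra. }
  assert (HdJ : dJf eps K <= - m * PI).
  { unfold dJf.
    apply (is_RInt_le (fun t => cos t ^ 2 * dGf eps (K * cos t ^ 2)) (fun t => scal (- m) (cos t ^ 2)) 0 (2 * PI) _ (scal (- m) PI)).
    - lra.
    - apply (RInt_correct (V:=R_CompleteNormedModule)). apply ex_RInt_df; auto.
    - apply (is_RInt_scal (V:=R_NormedModule)). apply cos2_int.
    - intros t _. change (scal (- m) (cos t ^ 2)) with (- m * cos t ^ 2).
      assert (Hb := dGf_bound eps (K * cos t ^ 2) S He (Hs t)). fold W in Hb. fold m in Hb.
      assert (0 <= cos t ^ 2) by apply pow2_ge_0. nra. }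
  assert (Hder : is_derive (cfun eps) K (2 * PI * (- dJf eps K / Jf eps K ^ 2))).
  { apply is_derive_ext_loc with (f := fun H => 2 * PI * / Jf eps H).
    - apply cfun_loc; auto.
    - apply is_derive_scal. apply is_derive_inv; [apply Jf_derive; auto | lra]. }
  split.
  - eexists. exact Hder.
  - rewrite (is_derive_unique _ _ _ Hder).
    eapply Rle_trans; [| apply Rle_abs].
    set (J := Jf eps K) in *. set (dJ := dJf eps K) in *.
    assert (HJ2 : 0 < J ^ 2) by (apply pow_lt; lra).
    apply Rmult_le_reg_r with (J ^ 2); [lra|].
    replace (2 * PI * (- dJ / J ^ 2) * J ^ 2) with (2 * PI * (- dJ)) by (field; lra).
    assert (J ^ 2 <= 4 * PI ^ 2) by nra.
    nra.
Qed.
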